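(* Let $n\ge 3$ and let $K$ be a proper $4$-coloring of $H_2(n,n-1)$. (a) If $x_1,x_2,x_3,x_4$ are vertices forming a path of length $3$ (in this order) all of whose edges $(x_1,x_2),(x_2,x_3),(x_3,x_4)$ are transition edges for $K$, then $K(x_1),K(x_2),K(x_3),K(x_4)$ are pairwise distinct. (b) There is no simple path in $H_2(n,n-1)$ of length greater than $3$ all of whose edges are transition edges for $K$.
   Context: $H_2(n,n-1)$ is the simple undirected graph with vertex set $\mathbb{Z}_2^n$ in which $x,y$ are adjacent iff their Hamming distance is at least $n-1$. For a proper $k$-coloring $K$ of a simple graph, an edge $(x,y)$ is a transition edge for $K$ if swapping the colors of $x$ and $y$ (all other colors unchanged) yields again a proper $k$-coloring. *)

(* Defs.v *)
From mathcomp Require Import all_boot.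
Set Implicit Arguments. Unset Strict Implicit. Unset Printing Implicit Defensive.

Definition vert (n : nat) : finType := {ffun 'I_n -> bool}.

Definition hamming n (x y : vert n) : nat := #|[set i : 'I_n | x i != y i]|.

Definition H2adj n : rel (vert n) := fun x y => n.-1 <= hamming x y.

Definition proper_col n k (K : vert n -> 'I_k) : bool :=
  [forall x, forall y, H2adj x y ==> (K x != K y)].

Definition swap_col n k (K : vert n -> 'I_k) (x y : vert n) : vert n -> 'I_k :=
  fun z => if z == x then K y else if z == y then K x else K z.

Definition transition_edge n k (K : vert n -> 'I_k) (x y : vert n) : bool :=
  H2adj x y && proper_col (swap_col K x y).

(* Main.v *)
Require Import Defs.
From mathcomp Require Import all_boot.
From mathcomp Require Import zify.
Set Implicit Arguments. Unset Strict Implicit.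

Section Aux.
Variable n : nat.
Variable k : nat.

Lemma hamC (x y : vert n) : hamming x y = hamming y x.
Proof. by rewrite /hamming; apply: eq_card => i; rewrite !inE eq_sym. Qed.

Definition vx (a b c : vert n) : vert n := [ffun i => a i (+) b i (+) c i].

Lemma ham_vx (a b c : vert n) : hamming (vx a b c) a = hamming b c.
Proof.
rewrite /hamming; apply: eq_card => i; rewrite !inE ffunE.
by case: (a i); case: (b i); case: (c i).
Qed.

Lemma ham_vx2 (a b c : vert n) : hamming a (vx a b c) = hamming b c.
Proof. by rewrite hamC ham_vx. Qed.

Lemma ham_vx3 (a b c : vert n) : hamming (vx a b c) c = hamming a b.
Proof.
rewrite /hamming; apply: eq_card => i; rewrite !inE ffunE.
by case: (a i); case: (b i); case: (c i).
Qed.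

Lemma vx_inj (a b c d : vert n) : vx a b c = vx d b c -> a = d.
Proof.
move=> /ffunP H; apply/ffunP => i; move: (H i); rewrite !ffunE.
by case: (a i); case: (b i); case: (c i); case: (d i).
Qed.

Lemma vx_inj3 (a b c d : vert n) : vx a b c = vx a b d -> c = d.
Proof.
move=> /ffunP H; apply/ffunP => i; move: (H i); rewrite !ffunE.
by case: (a i); case: (b i); case: (c i); case: (d i).
Qed.

Lemma vx_eq1 (a b c : vert n) : vx a b c = b -> a = c.
Proof.
move=> /ffunP H; apply/ffunP => i; move: (H i); rewrite !ffunE.
by case: (a i); case: (b i); case: (c i).
Qed.

Lemma vx_eq2 (a b c d : vert n) : vx a b c = d -> a = vx d b c.
Proof.
move=> /ffunP H; apply/ffunP => i; move: (H i); rewrite !ffunE.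
by case: (a i); case: (b i); case: (c i); case: (d i).
Qed.

Lemma vx_cancel (a b : vert n) : vx a a b = b.
Proof. by apply/ffunP => i; rewrite !ffunE; case: (a i); case: (b i). Qed.

Lemma adj_neq (x y : vert n) : 1 < n -> H2adj x y -> x != y.
Proof.
move=> hn; apply: contraTneq => ->; rewrite /H2adj /hamming.
rewrite (_ : [set i | y i != y i] = set0) ?cards0; last first.
  by apply/setP=> i; rewrite !inE eqxx.
rewrite -ltnNge; lia.
Qed.

Lemma properP (K : vert n -> 'I_k) x y :
  proper_col K -> H2adj x y -> K x != K y.
Proof. by move/forallP/(_ x)/forallP/(_ y)/implyP; apply. Qed.

Lemma tr1 (K : vert n -> 'I_k) x y z : 1 < n ->
  transition_edge K x y -> H2adj z y -> z != x -> K z != K x.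
Proof.
move=> hn /andP [Hxy Hp] Hzy Hzx.
have := properP Hp Hzy; rewrite /swap_col.
have Hzy' := adj_neq hn Hzy.
have Hyx : y != x by rewrite eq_sym; exact: adj_neq hn Hxy.
by rewrite (negbTE Hzx) (negbTE Hzy') (negbTE Hyx) eqxx.
Qed.

Lemma tr2 (K : vert n -> 'I_k) x y z : 1 < n ->
  transition_edge K x y -> H2adj z x -> z != y -> K z != K y.
Proof.
move=> hn /andP [Hxy Hp] Hzx Hzy.
have := properP Hp Hzx; rewrite /swap_col.
have Hzx' := adj_neq hn Hzx.
by rewrite (negbTE Hzx') (negbTE Hzy) eqxx.
Qed.

Lemma tadj (K : vert n -> 'I_k) x y : transition_edge K x y -> H2adj x y.
Proof. by case/andP. Qed.

Lemma H2C (x y : vert n) : H2adj x y = H2adj y x.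
Proof. by rewrite /H2adj hamC. Qed.

End Aux.

Lemma uniq4 (s : seq 'I_4) : uniq s -> size s <= 4.
Proof.
move=> Us; rewrite -(card_uniqP Us).
by rewrite -[X in _ <= X]card_ord; apply: max_card.
Qed.

Lemma avoid3 (T : eqType) (s : seq T) (a b c : T) :
  uniq s -> 3 < size s -> exists2 w, w \in s & w \notin [:: a; b; c].
Proof.
move=> Us Hs.
case Hh: (has (fun w => w \notin [:: a; b; c]) s).
  by case/hasP: Hh => w ? ?; exists w.
have Hsub : {subset s <= [:: a; b; c]}.
  move=> w ws; apply/negPn; apply/negP => Hw.
  by move/negbT/hasPn: Hh => /(_ w ws); rewrite Hw.
by have := uniq_leq_size Us Hsub; rewrite leqNgt Hs.
Qed.

Lemma nbrs4 n (hn : 3 <= n) (x : vert n) :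
  exists s : seq (vert n), [/\ uniq s, 3 < size s & forall w, w \in s -> H2adj x w].
Proof.
have h0 : 0 < n by apply: leq_trans hn.
have h1 : 1 < n by apply: leq_trans hn.
pose i0 := @Ordinal n 0 h0.
pose i1 := @Ordinal n 1 h1.
pose i2 := @Ordinal n 2 hn.
pose cp : vert n := [ffun j => ~~ x j].
pose fl (i : 'I_n) : vert n := [ffun j => if j == i then x j else ~~ x j].
have neqf : forall (f g : vert n) i, f i != g i -> f != g.
  by move=> f g i; apply: contra => /eqP ->.
have cpf : forall i, cp != fl i.
  by move=> i; apply: (neqf _ _ i); rewrite !ffunE eqxx; case: (x i).
have ff : forall i j, i != j -> fl i != fl j.
  move=> i j Hij; apply: (neqf _ _ i); rewrite !ffunE eqxx (negbTE Hij).
  by case: (x i).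
have hf : forall i, H2adj x (fl i).
  move=> i; rewrite /H2adj /hamming.
  rewrite (_ : [set j | x j != fl i j] = [set~ i]) ?cardsC1 ?card_ord //.
  apply/setP => j; rewrite !inE ffunE.
  case: (j =P i) => [->|/eqP Hne]; first by rewrite eqxx; case: (x i).
  by case: (x j).
exists [:: cp; fl i0; fl i1; fl i2]; split => //.
  by rewrite /= !inE !negb_or !cpf !ff.
move=> w; rewrite !inE => /or4P [] /eqP -> //.
rewrite /H2adj /hamming.
rewrite (_ : [set j | x j != cp j] = setT) ?cardsT ?card_ord; first lia.
by apply/setP => j; rewrite !inE ffunE; case: (x j).
Qed.

Lemma partA n (hn : 3 <= n) (K : vert n -> 'I_4) (hK : proper_col K)
  x1 x2 x3 x4 : uniq [:: x1; x2; x3; x4] ->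
  transition_edge K x1 x2 -> transition_edge K x2 x3 ->
  transition_edge K x3 x4 -> uniq [:: K x1; K x2; K x3; K x4].
Proof.
have h1 : 1 < n by lia.
move=> U T12 T23 T34.
move: U; rewrite /= !inE !negb_or => /and4P [/and3P [n12 n13 n14] /andP [n23 n24] n34 _].
have A12 := tadj T12; have A23 := tadj T23; have A34 := tadj T34.
have k12 := properP hK A12; have k23 := properP hK A23; have k34 := properP hK A34.
have k13 : K x1 != K x3 by apply: (tr2 h1 T23).
have k24 : K x4 != K x2 by apply: (tr1 h1 T23); [rewrite H2C | rewrite eq_sym].
have k14 : K x1 != K x4.
  apply/negP => /eqP E.
  have [s [Us Ss Hs]] := nbrs4 hn x2.
  have [w ws] := avoid3 x1 x3 (vx x4 x2 x3) Us Ss.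
  rewrite !inE !negb_or => /and3P [w1 w3 w4].
  have Aw : H2adj w x2 by rewrite H2C; apply: Hs.
  pose w' := vx w x2 x3.
  have Aw' : H2adj w' x3 by rewrite /H2adj ham_vx3.
  have Aww : H2adj w w' by rewrite /H2adj ham_vx2.
  have w'2 : w' != x2.
    by apply: contra w3 => /eqP /vx_eq1 ->.
  have w'4 : w' != x4.
    by apply: contra w4 => /eqP /vx_eq2 ->.
  have c1 : K w != K x1 by apply: (tr1 h1 T12).
  have c2 : K w != K x2 by apply: properP hK Aw.
  have c3 : K w != K x3 by apply: (tr2 h1 T23).
  have d4 : K w' != K x4 by apply: (tr2 h1 T34).
  have d2 : K w' != K x2 by apply: (tr1 h1 T23).
  have d3 : K w' != K x3 by apply: properP hK Aw'.
  have e : K w != K w' by apply: properP hK Aww.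
  rewrite -E in d4.
  suff : uniq [:: K x1; K x2; K x3; K w; K w'] by move/uniq4.
  rewrite /= !inE !negb_or.
  by repeat (apply/andP; split); try done; rewrite eq_sym.
by rewrite k12 k13 k14 k23 eq_sym k24 k34.
Qed.

Theorem lemma5p5 (n : nat) (hn : 3 <= n) (K : vert n -> 'I_4)
  (hK : proper_col K) :
  (forall x1 x2 x3 x4 : vert n,
      uniq [:: x1; x2; x3; x4] ->
      transition_edge K x1 x2 -> transition_edge K x2 x3 ->
      transition_edge K x3 x4 ->
      uniq [:: K x1; K x2; K x3; K x4])
  /\
  (forall (x : vert n) (p : seq (vert n)),
      uniq (x :: p) -> path (transition_edge K) x p -> size p <= 3).
Proof.
split; first by move=> *; apply: partA.
have h1 : 1 < n by lia.
move=> x p.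
case: p => [|x2 [|x3 [|x4 [|x5 rest]]]] // U P.
exfalso.
move: P => /= /and5P [T12 T23 T34 T45 _].
have U1 : uniq [:: x; x2; x3; x4].
  by move: U; rewrite (_ : [:: x, x2, x3, x4, x5 & rest] = [:: x; x2; x3; x4] ++ x5 :: rest) // cat_uniq => /andP [].
have U2 : uniq [:: x2; x3; x4; x5].
  move: U; rewrite (_ : [:: x, x2, x3, x4, x5 & rest] = [:: x] ++ ([:: x2; x3; x4; x5] ++ rest)) //.
  by rewrite !cat_uniq => /and3P [_ _ /and3P []].
have n15 : x != x5.
  move: U => /andP [Hx _]; apply: contra Hx => /eqP ->.
  by rewrite !inE eqxx !orbT.
have UK1 := partA hn hK U1 T12 T23 T34.
have UK2 := partA hn hK U2 T23 T34 T45.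
move: UK1 UK2; rewrite /= !inE !negb_or.
move=> /and4P[/and3P[a12 a13 a14] /andP[a23 a24] a34 _].
move=> /and4P[/and3P[b23 b24 b25] /andP[b34 b35] b45 _].
have E : K x5 = K x.
  apply/eqP; apply/negPn/negP => ne.
  suff : uniq [:: K x; K x2; K x3; K x4; K x5] by move/uniq4.
  rewrite /= !inE !negb_or.
  by repeat (apply/andP; split); try done; rewrite eq_sym.
pose v := vx x2 x3 x4.
have Av2 : H2adj v x2 by rewrite /H2adj ham_vx; case/andP: T34.
have Av4 : H2adj v x4 by rewrite /H2adj ham_vx3; case/andP: T23.
have v3 : v != x3.
  move: U2; rewrite /= !inE !negb_or => /and4P[/and3P[_ nn _] _ _ _].
  by apply: contra nn => /eqP /vx_eq1 ->.
case: (v =P x) => [Ev|/eqP nvx].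
  have : K x != K x5 by apply: (tr2 h1 T45); rewrite // -Ev.
  by rewrite E eqxx.
case: (v =P x5) => [Ev|/eqP nv5].
  have : K x5 != K x by apply: (tr1 h1 T12); [rewrite -Ev | rewrite eq_sym].
  by rewrite E eqxx.
have c1 : K v != K x by apply: (tr1 h1 T12).
have c2 : K v != K x2 by apply: properP hK Av2.
have c3 : K v != K x3 by apply: (tr2 h1 T23).
have c4 : K v != K x4 by apply: properP hK Av4.
suff : uniq [:: K x; K x2; K x3; K x4; K v] by move/uniq4.
rewrite /= !inE !negb_or.
by repeat (apply/andP; split); try done; rewrite eq_sym.
Qed.
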